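(* Let $(R,\mathfrak m)$ be a one-dimensional Cohen–Macaulay local ring and let $I,J$ be regular ideals of $R$. Suppose there exists $q\in I$ with $IJ=qJ$. Then for every regular trace ideal $L$ of $R$ with $L\subseteq\mathrm{tr}_R(J)$, the equality $IL=qL$ holds.
   Context: An ideal is regular if it contains a non-zerodivisor. The trace ideal of an $R$-module $M$ is $\mathrm{tr}_R(M)=\sum_{f\in\mathrm{Hom}_R(M,R)}\mathrm{Im}f$; an ideal is a trace ideal if it equals $\mathrm{tr}_R(M)$ for some $M$. *)

(* Defs.v *)
From HB Require Import structures.
From mathcomp Require Import all_boot all_order all_algebra.
Set Implicit Arguments. Unset Strict Implicit. Unset Printing Implicit Defensive.
Import GRing.Theory.
Local Open Scope ring_scope.

Section CommAlg.
Variable R : comNzRingType.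

Definition set_eq (A B : R -> Prop) := forall x, A x <-> B x.
Definition incl (A B : R -> Prop) := forall x, A x -> B x.

Definition is_ideal (I : R -> Prop) :=
  [/\ I 0, (forall x y, I x -> I y -> I (x + y)) & (forall r x, I x -> I (r * x))].

Definition is_prime_ideal (P : R -> Prop) :=
  [/\ is_ideal P, ~ P 1 & forall a b, P (a * b) -> P a \/ P b].

Definition is_maximal_ideal (M : R -> Prop) :=
  [/\ is_ideal M, ~ M 1 &
      forall J, is_ideal J -> incl M J -> set_eq J M \/ J 1].

Definition gen_ideal (s : seq R) (x : R) :=
  exists c : 'I_(size s) -> R, x = \sum_(i < size s) c i * s`_i.

Definition finitely_generated (I : R -> Prop) :=
  exists s : seq R, set_eq I (gen_ideal s).

Definition noetherian := forall I, is_ideal I -> finitely_generated I.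

Definition is_local (m : R -> Prop) :=
  is_maximal_ideal m /\ forall n, is_maximal_ideal n -> set_eq n m.

Definition prime_chain (n : nat) (P : nat -> R -> Prop) :=
  (forall i, (i <= n)%N -> is_prime_ideal (P i)) /\
  (forall i, (i < n)%N -> incl (P i) (P i.+1) /\ ~ incl (P i.+1) (P i)).

Definition krull_dim_eq (n : nat) :=
  (exists P, prime_chain n P) /\ ~ (exists P, prime_chain n.+1 P).

(* x is a non-zerodivisor on R / (s) *)
Definition nzd_mod (s : seq R) (x : R) :=
  forall r, gen_ideal s (x * r) -> gen_ideal s r.

Definition all_in (m : R -> Prop) (s : seq R) := forall x, x \in s -> m x.

Definition regular_seq (m : R -> Prop) (s : seq R) :=
  [/\ all_in m s, (forall i, (i < size s)%N -> nzd_mod (take i s) s`_i)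
    & ~ gen_ideal s 1].

Definition depth_eq (m : R -> Prop) (n : nat) :=
  (exists s, size s = n /\ regular_seq m s) /\
  ~ (exists s, size s = n.+1 /\ regular_seq m s).

Definition cohen_macaulay_local (m : R -> Prop) :=
  [/\ noetherian, is_local m & exists d, krull_dim_eq d /\ depth_eq m d].

Definition nonzerodivisor (x : R) := forall r, x * r = 0 -> r = 0.

Definition regular_ideal (I : R -> Prop) := exists x, I x /\ nonzerodivisor x.

Definition prod_ideal (I J : R -> Prop) (x : R) :=
  exists n (a b : 'I_n -> R), [/\ forall k, I (a k), forall k, J (b k)
    & x = \sum_(k < n) a k * b k].

Definition scale_ideal (q : R) (J : R -> Prop) (x : R) :=
  exists j, J j /\ x = q * j.

Definition hom_on (M : lmodType R) (N : M -> Prop) (f : M -> R) :=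
  forall (a : R) (x y : M), N x -> N y -> f (a *: x + y) = a * f x + f y.

(* trace of the R-module N (a submodule of M): sum of images of all
   homomorphisms N -> R, i.e. finite sums of values f_k(x_k) *)
Definition trace_sub (M : lmodType R) (N : M -> Prop) (r : R) :=
  exists n (f : 'I_n -> M -> R) (x : 'I_n -> M),
    [/\ forall k, hom_on N (f k), forall k, N (x k)
      & r = \sum_(k < n) f k (x k)].

Definition trace_mod (M : lmodType R) := trace_sub (fun _ : M => True).

Definition trace_ideal_of (J : R -> Prop) := @trace_sub R^o J.

Definition is_trace_ideal (L : R -> Prop) :=
  exists M : lmodType R, set_eq L (trace_mod M).

End CommAlg.

(* Main.v *)
Require Import Defs.
From mathcomp Require Import all_boot all_order all_algebra.
From Stdlib Require Import ClassicalEpsilon.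
Local Open Scope ring_scope.
Import GRing.Theory.

Lemma fchoice (T U : Type) (P : T -> U -> Prop) :
  (forall t, exists u, P t u) -> exists g : T -> U, forall t, P t (g t).
Proof.
move=> H; exists (fun t => proj1_sig (constructive_indefinite_description _ (H t))).
move=> t; exact: proj2_sig (constructive_indefinite_description _ (H t)).
Qed.

Lemma ideal_sum (R : comNzRingType) (L : R -> Prop) n (c : 'I_n -> R) :
  is_ideal L -> (forall k, L (c k)) -> L (\sum_(k < n) c k).
Proof. case=> L0 LD _ Hc; apply: big_ind => //. Qed.

Lemma hom_0 (R : comNzRingType) (M : lmodType R) (N : M -> Prop) f :
  hom_on N f -> N 0 -> f 0 = 0.
Proof.
move=> Hf N0; have := Hf 1 0 0 N0 N0.
rewrite scaler0 addr0 mul1r => /(congr1 (fun z => z - f 0)).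
by rewrite subrr addrK.
Qed.
Arguments hom_0 {R M N f}.

Lemma hom_Z (R : comNzRingType) (M : lmodType R) (N : M -> Prop) f a x :
  hom_on N f -> N 0 -> N x -> f (a *: x) = a * f x.
Proof.
move=> Hf N0 Nx; have := Hf a x 0 Nx N0.
by rewrite addr0 (hom_0 Hf N0) addr0.
Qed.

Arguments hom_Z {R M N f} a {x}.

Theorem lemma2p4 (R : comNzRingType) (m : R -> Prop)
  (HCM : cohen_macaulay_local m) (Hdim : krull_dim_eq R 1)
  (I J : R -> Prop) (HI : is_ideal I) (HJ : is_ideal J)
  (HIr : regular_ideal I) (HJr : regular_ideal J)
  (q : R) (HqI : I q) (HIJ : set_eq (prod_ideal I J) (scale_ideal q J)) :
  forall L : R -> Prop, is_ideal L -> regular_ideal L -> is_trace_ideal L ->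
    incl L (trace_ideal_of J) ->
    set_eq (prod_ideal I L) (scale_ideal q L).
Proof.
have Hq : nonzerodivisor q.
  case: HIr => a0 [Ia0 na0]; case: HJr => b0 [Jb0 nb0].
  have: prod_ideal I J (a0 * b0).
    exists 1%N, (fun _ => a0), (fun _ => b0); split => //; by rewrite big_ord1.
  case/HIJ => j [_ Ej] r qr0; apply: nb0; apply: na0.
  by rewrite mulrA Ej mulrAC qr0 mul0r.
have canq : forall u v, q * u = q * v -> u = v.
  move=> u v E; apply/eqP; rewrite -subr_eq0; apply/eqP; apply: Hq.
  by rewrite mulrBr E subrr.
have J0 : J 0 by case: HJ.
have key : forall a l, I a -> trace_ideal_of J l -> exists r, a * l = q * r.
  move=> a l Ia [n [f [x [Hf Hx ->]]]].
  have: forall k, exists j, J j /\ a * x k = q * j.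
    move=> k; apply: (proj1 (HIJ _)); exists 1%N, (fun _ => a), (fun _ => x k).
    split => //; by rewrite big_ord1.
  case/fchoice => j Hj.
  exists (\sum_(k < n) f k (j k)).
  rewrite !mulr_sumr; apply: eq_bigr => k _.
  case: (Hj k) => Jj Ejk.
  rewrite -(hom_Z a (Hf k) J0 (Hx k)) -(hom_Z q (Hf k) J0 Jj).
  congr (f k _); exact: Ejk.
move=> L HL HLr [M HM] HLJ.
have [L0 LD LM] := HL.
pose phi a l := epsilon (inhabits (0 : R)) (fun r => a * l = q * r).
have Hphi : forall a l, I a -> L l -> a * l = q * phi a l.
  move=> a l Ia Ll; rewrite /phi; apply: (epsilon_spec (inhabits (0 : R))
    (fun r => a * l = q * r)); exact: key Ia (HLJ _ Ll).
have phihom : forall a, I a -> @hom_on R R^o L (phi a).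
  move=> a Ia b x y Lx Ly.
  have Lb : L (b * x + y) by apply: LD => //; exact: LM.
  apply: canq; rewrite -(Hphi a _ Ia Lb) mulrDr.
  by rewrite mulrDr [q * (b * _)]mulrCA -(Hphi a x Ia Lx) -(Hphi a y Ia Ly) mulrCA.
have gL : forall (g : M -> R) (z : M), hom_on (fun _ => True) g -> L (g z).
  move=> g z Hg; apply/HM; exists 1%N, (fun _ => g), (fun _ => z).
  split => //; by rewrite big_ord1.
have phiL : forall a l, I a -> L l -> L (phi a l).
  move=> a l Ia Ll; have := Ll; case/HM => n [g [z [Hg Hz El]]].
  have E : phi a l = \sum_(k < n) phi a (g k (z k)).
    apply: canq; rewrite -(Hphi a _ Ia Ll) El !mulr_sumr.
    apply: eq_bigr => k _; apply: Hphi => //; exact: gL.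
  rewrite E; apply/HM; exists n, (fun k w => phi a (g k w)), z.
  split => // k b w w' _ _ /=.
  rewrite (Hg k b w w' Logic.I Logic.I).
  exact: (phihom a Ia b (g k w) (g k w') (gL _ _ (Hg k)) (gL _ _ (Hg k))).
move=> x; split.
  case=> n [a [b [Ia Lb ->]]].
  exists (\sum_(k < n) phi (a k) (b k)); split.
    apply: ideal_sum => // k; exact: phiL.
  rewrite mulr_sumr; apply: eq_bigr => k _; exact: Hphi.
case=> j [Lj ->]; exists 1%N, (fun _ => q), (fun _ => j).
split => //; by rewrite big_ord1.
Qed.
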